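(* If $G$ is a $2$-degenerate graph with maximum degree $\Delta(G) \ge 2$, then $\chi_s'(G) \le 6\Delta(G) - 7$.
   Context: All graphs are finite and simple. A graph is $2$-degenerate if every subgraph of it has a vertex of degree at most $2$. A strong edge coloring of $G$ is an assignment of colors to the edges of $G$ such that every path with three edges receives three distinct colors; equivalently, any two distinct edges that share an endpoint, or whose endpoints are joined by an edge, receive different colors. The strong chromatic index $\chi_s'(G)$ is the minimum number of colors in a strong edge coloring of $G$. *)

(* Defs.v *)
From mathcomp Require Import all_boot.
Set Implicit Arguments. Unset Strict Implicit. Unset Printing Implicit Defensive.

Definition simple_graph (T : finType) (e : rel T) : Prop :=
  symmetric e /\ irreflexive e.

Definition edges (T : finType) (e : rel T) : {set {set T}} :=
  [set [set p.1; p.2] | p in [set q : T * T | e q.1 q.2]].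

Definition degree (T : finType) (e : rel T) (v : T) : nat := #|[set u | e v u]|.

Definition max_degree (T : finType) (e : rel T) : nat := \max_(v : T) degree e v.

Definition two_degenerate (T : finType) (e : rel T) : Prop :=
  forall S : {set T}, S != set0 ->
    exists2 v, v \in S & #|[set u in S | e v u]| <= 2.

Definition edges_conflict (T : finType) (e : rel T) (f1 f2 : {set T}) : bool :=
  [exists x in f1, exists y in f2, (x == y) || e x y].

Definition strong_edge_coloring (T : finType) (e : rel T) (k : nat)
    (c : {set T} -> 'I_k) : Prop :=
  forall f1 f2, f1 \in edges e -> f2 \in edges e -> f1 != f2 ->
    edges_conflict e f1 f2 -> c f1 != c f2.

Definition strong_chromatic_index_le (T : finType) (e : rel T) (k : nat) : Prop :=
  exists c : {set T} -> 'I_k, @strong_edge_coloring T e k c.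

(* Main.v *)
Require Import Defs.
From mathcomp Require Import all_boot zify.

Section Rank.
Variables (T : finType) (e : rel T).

Lemma rank_ex : two_degenerate e -> forall n (S : {set T}), #|S| = n ->
  exists r : T -> nat, {in S &, injective r} /\
    forall v, v \in S -> #|[set z in S | e v z & r v < r z]| <= 2.
Proof.
move=> H2; elim=> [|n IH] S hS.
  exists (fun _ => 0); split; first by move=> x y; move/eqP: hS; rewrite cards_eq0 => /eqP ->; rewrite inE.
  by move=> v; move/eqP: hS; rewrite cards_eq0 => /eqP ->; rewrite inE.
have S0 : S != set0 by apply/eqP => S0; rewrite S0 cards0 in hS.
have [v vS hv] := H2 S S0.
have hS' : #|S :\ v| = n by move: hS; rewrite (cardsD1 v) vS; case.
have [r [rinj rb]] := IH _ hS'.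
exists (fun x => if x == v then 0 else (r x).+1); split.
  move=> x y xS yS /=.
  case: (eqVneq x v) => [->|xv]; case: (eqVneq y v) => [->|yv] //.
  all: try (move=> /eqP; rewrite eqSS => /eqP hr; apply: (rinj x y) => //; by rewrite !inE ?xv ?yv ?xS ?yS).
move=> x xS; case: (eqVneq x v) => [->|xv].
  apply: leq_trans hv; apply: subset_leq_card; apply/subsetP => z.
  by rewrite !inE => /and3P [-> ->].
have xS' : x \in S :\ v by rewrite !inE xv xS.
apply: leq_trans (rb x xS'); rewrite leq_eqVlt; apply/orP; left; apply/eqP.
apply: eq_card => z; rewrite !inE.
case: (eqVneq z v) => [->|zv] /=; first by rewrite !andbF.
by rewrite ltnS.
Qed.
End Rank.


Lemma card_bigcup_le (T I : finType) (A : {set I}) (S : I -> {set T}) :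
  #|\bigcup_(i in A) S i| <= \sum_(i in A) #|S i|.
Proof.
elim/big_rec2: _ => [|i n U _ IH]; first by rewrite cards0.
rewrite cardsU; apply: leq_trans (leq_subr _ _) _; by rewrite leq_add2l.
Qed.

Lemma cardU_le (T : finType) (A B : {set T}) : #|A :|: B| <= #|A| + #|B|.
Proof. by rewrite cardsU leq_subr. Qed.
Arguments cardU_le {T}.
Arguments card_bigcup_le {T I}.

Lemma arith :  forall nA nB nC nD nY a b c d m : nat,
  nA <= a - 1 -> nB <= nY * m -> nC <= a - 1 -> nD <= c ->
  nY * m <= (b + (d - 1)) * m -> b + a <= m -> d + c <= m -> b <= 2 -> d <= 2 ->
  0 < a -> 0 < d -> 1 < m -> nA + nB + nC + nD <= 6 * m - 8.
Proof.
move=> nA nB nC nD nY a b c d m h1 h2 h3 h4 h5 h6 h7 h8 h9 h10 h11 h12.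
have h13 : nB <= (b + (d - 1)) * m by apply: leq_trans h5.
clear h2 h5.
case: b h6 h8 h13 => [|[|[|b]]] // h6 h8 h13;
case: d h7 h9 h11 h13 => [|[|[|d]]] // h7 h9 h11 h13; rewrite /= ?mul0n ?mul1n ?mul2n -?addnn in h13; lia.
Qed.

Section Main.
Variables (T : finType) (e : rel T) (r : T -> nat).
Hypotheses (sym : symmetric e) (irr : irreflexive e) (rinj : injective r)
  (hout : forall v, #|[set z | e v z & r v < r z]| <= 2)
  (hD : 2 <= max_degree e).

Definition nb v := [set z | e v z].
Definition out v := [set z | e v z & r v < r z].
Definition inn v := [set z | e v z & r z < r v].

Lemma out_inn v : #|out v| + #|inn v| <= max_degree e.
Proof.
rewrite -cardsUI.
have -> : out v :&: inn v = set0.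
  apply/setP => z; rewrite !inE; apply/negbTE; lia.
rewrite cards0 addn0; apply: (@leq_trans (degree e v)); last first.
  rewrite /max_degree; exact: (@leq_bigmax _ (fun v => degree e v) v).
apply: subset_leq_card; apply/subsetP => z; rewrite !inE.
by case/orP => /andP [].
Qed.

Lemma nb_le v : #|nb v| <= max_degree e.
Proof. rewrite /max_degree; exact: (@leq_bigmax _ (fun v => degree e v) v). Qed.

Lemma key (F : {set {set T}}) : F \subset edges e -> F != set0 ->
  exists2 f, f \in F &
    #|[set g in F | (g != f) && edges_conflict e f g]| <= 6 * max_degree e - 8.
Proof.
move=> FE F0.
have edgeP g : g \in edges e -> exists x y, [/\ e x y, r x < r y & g = [set x; y]].
  move=> /imsetP [p]; rewrite inE => hp ->.
  case: (ltngtP (r p.1) (r p.2)) => h.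
  - by exists p.1, p.2.
  - by exists p.2, p.1; rewrite sym setUC.
  - by move: hp; rewrite (rinj _ _ h) irr.
pose P := [set p : T * T | [&& e p.1 p.2, r p.1 < r p.2 & [set p.1; p.2] \in F]].
have [g0 g0F] := set0Pn _ F0.
have [x0 [y0 [e0 r0 g0E]]] := edgeP g0 (subsetP FE g0 g0F).
have p0P : (x0, y0) \in P by rewrite inE /= e0 r0 -g0E.
case: (@arg_minnP _ (x0, y0) (fun p => p \in P) (fun p => r p.2) p0P).
move=> [u w]; rewrite inE /= => /and3P [euw ruw fF] hmin.
exists [set u; w] => //.
pose Y := out w :|: (out u :\ w).
pose A := [set [set x; w] | x in inn w :\ u].
pose B := \bigcup_(y in Y) [set [set y; z] | z in nb y].
pose C := \bigcup_(x in inn w :\ u) [set [set x; z] | z in out x :\ w].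
pose Dd := \bigcup_(x in inn u) [set [set x; z] | z in out x :\ u].
pose U := A :|: B :|: C :|: Dd.
have inA g : g \in A -> g \in U by rewrite !in_setU => ->.
have inB g : g \in B -> g \in U by rewrite !in_setU => ->; rewrite ?orbT.
have inC g : g \in C -> g \in U by rewrite !in_setU => ->; rewrite ?orbT.
have inD g : g \in Dd -> g \in U by rewrite !in_setU => ->; rewrite ?orbT.
have sub : [set g in F | (g != [set u; w]) && edges_conflict e [set u; w] g] \subset U.
  apply/subsetP => g; rewrite inE => /andP [gF /andP [gf hc]].
  have [x [y [exy rxy gE]]] := edgeP g (subsetP FE g gF).
  subst g.
  have ryw : r w <= r y.
    by have := hmin (x, y); rewrite inE /= exy rxy gF => /(_ isT).
  case: (eqVneq y w) => [yw|ynw].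
    subst y; apply: inA; apply/imsetP; exists x => //.
    rewrite !inE sym exy rxy !andbT; apply/eqP => xu; subst x.
    by rewrite eqxx in gf.
  have rwy : r w < r y.
    rewrite ltn_neqAle ryw andbT; apply/eqP => h; move: ynw; by rewrite (rinj _ _ h) eqxx.
  case yY: (y \in Y).
    apply: inB; apply/bigcupP; exists y => //; apply/imsetP; exists x.
      by rewrite inE sym.
    by rewrite setUC.
  case xY: (x \in Y).
    apply: inB; apply/bigcupP; exists x => //; apply/imsetP; exists y => //.
    by rewrite inE.
  move/negbT: yY; rewrite in_setU negb_or => /andP [yw1 yu1].
  move/negbT: xY; rewrite in_setU negb_or => /andP [xw1 xu1].
  have ewy : e w y = false.
    by apply/negbTE; move: yw1; rewrite inE rwy andbT.
  have euy : e u y = false.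
    apply/negbTE; move: yu1; rewrite !inE ynw /=.
    have -> : r u < r y by apply: ltn_trans ruw rwy.
    by rewrite andbT.
  move: hc => /existsP [p /andP [pf /existsP [q /andP [qg hpq]]]].
  move: pf qg; rewrite !in_set2.
  case/orP => /eqP pe; case/orP => /eqP qe; subst p q.
  -
    case: (eqVneq u x) => [ux|uxn] /= in hpq *.
      by subst x; rewrite exy in euy.
    case: (ltngtP (r x) (r u)) => hxu.
    + apply: inD; apply/bigcupP; exists x.
        by rewrite inE hpq hxu.
      apply/imsetP; exists y => //.
      rewrite !inE exy rxy !andbT; apply/eqP => yu; subst y; by move: ryw; rewrite leqNgt ruw.
    + case: (eqVneq x w) => [xw|xnw].
        by subst x; rewrite exy in ewy.
      by move: xu1; rewrite !inE xnw hpq hxu.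
    + by move: uxn; rewrite (rinj _ _ hxu) eqxx.
  -
    move: hpq; rewrite euy orbF => /eqP uy; subst y; by move: ryw; rewrite leqNgt ruw.
  -
    case: (eqVneq w x) => [wx|wxn] /= in hpq *.
      by subst x; rewrite exy in ewy.
    case: (ltngtP (r x) (r w)) => hxw.
    + case: (eqVneq x u) => [xu|xnu].
        by subst x; rewrite exy in euy.
      apply: inC; apply/bigcupP; exists x.
        by rewrite !inE xnu hpq hxw.
      apply/imsetP; exists y => //.
      by rewrite !inE ynw exy rxy.
    + by move: xw1; rewrite !inE hpq hxw.
    + by move: wxn; rewrite (rinj _ _ hxw) eqxx.
  -
    by move: hpq; rewrite ewy orbF eq_sym (negbTE ynw).
have uinn : u \in inn w by rewrite inE sym euw ruw.
have wout : w \in out u by rewrite inE euw ruw.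
have cA : #|A| <= #|inn w| - 1.
  apply: leq_trans (leq_imset_card _ _) _.
  by rewrite [X in _ <= X - 1](cardsD1 u) uinn add1n subn1.
have cY : #|Y| <= #|out w| + (#|out u| - 1).
  rewrite /Y; apply: leq_trans (cardU_le _ _) _.
  by rewrite [X in _ <= _ + (X - 1)](cardsD1 w) wout add1n subn1.
have cB : #|B| <= #|Y| * max_degree e.
  rewrite /B; apply: leq_trans (card_bigcup_le _ _) _.
  rewrite -sum_nat_const; apply: leq_sum => y _.
  apply: leq_trans (leq_imset_card _ _) _; exact: nb_le.
have cC : #|C| <= #|inn w| - 1.
  rewrite /C; apply: leq_trans (card_bigcup_le _ _) _.
  apply: leq_trans (_ : \sum_(x in inn w :\ u) 1 <= _).
    apply: leq_sum => x; rewrite !inE => /and3P [_ ewx rxw].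
    apply: leq_trans (leq_imset_card _ _) _.
    have wx : w \in out x by rewrite inE sym ewx rxw.
    have := hout x; rewrite -/(out x) (cardsD1 w) wx => hh; clear -hh; lia.
  by rewrite sum_nat_const muln1 [X in _ <= X - 1](cardsD1 u) uinn add1n subn1.
have cD : #|Dd| <= #|inn u|.
  rewrite /Dd; apply: leq_trans (card_bigcup_le _ _) _.
  apply: leq_trans (_ : \sum_(x in inn u) 1 <= _).
    apply: leq_sum => x; rewrite !inE => /andP [eux rxu].
    apply: leq_trans (leq_imset_card _ _) _.
    have ux : u \in out x by rewrite inE sym eux rxu.
    have := hout x; rewrite -/(out x) (cardsD1 u) ux => hh; clear -hh; lia.
  by rewrite sum_nat_const muln1.
have cU : #|U| <= #|A| + #|B| + #|C| + #|Dd|.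
  rewrite /U; apply: leq_trans (cardU_le _ _) _; rewrite leq_add2r.
  apply: leq_trans (cardU_le _ _) _; rewrite leq_add2r.
  exact: cardU_le.
apply: leq_trans (subset_leq_card sub) _.
apply: leq_trans cU _.
have h1 := out_inn w; have h2 := out_inn u.
have h3 := hout w; have h4 := hout u; rewrite -/(out w) -/(out u) in h3 h4.
have a1 : 0 < #|inn w| by apply/card_gt0P; exists u.
have d1 : 0 < #|out u| by apply/card_gt0P; exists w.
have cYD := leq_mul cY (leqnn (max_degree e)).
exact: (arith _ _ _ _ _ _ _ _ _ _ cA cB cC cD cYD h1 h2 h3 h4 a1 d1 hD).
Qed.

Lemma conflict_sym f g : edges_conflict e f g -> edges_conflict e g f.
Proof.
case/existsP => x /andP [xf /existsP [y /andP [yg h]]].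
apply/existsP; exists y; rewrite yg /=; apply/existsP; exists x.
by rewrite xf /= eq_sym sym.
Qed.

Lemma color_all n : forall F : {set {set T}}, #|F| = n -> F \subset edges e ->
  exists c : {set T} -> 'I_(6 * max_degree e - 7),
    forall f g, f \in F -> g \in F -> f != g -> edges_conflict e f g -> c f != c g.
Proof.
have k0 : 0 < 6 * max_degree e - 7 by lia.
elim: n => [|n IH] F hF FE.
  exists (fun _ => Ordinal k0) => f g fF.
  by move/eqP: hF; rewrite cards_eq0 => /eqP FF; rewrite FF inE in fF.
have F0 : F != set0 by apply/eqP => FF; rewrite FF cards0 in hF.
have [f fF hf] := key F FE F0.
have hF' : #|F :\ f| = n by move: hF; rewrite (cardsD1 f) fF; case.
have FE' : F :\ f \subset edges e.
  by apply: subset_trans FE; apply: subsetDl.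
have [c hc] := IH _ hF' FE'.
pose Cf := [set g in F | (g != f) && edges_conflict e f g].
pose U := c @: Cf.
have cU : #|U| < 6 * max_degree e - 7.
  apply: leq_ltn_trans (leq_imset_card _ _) _; apply: leq_ltn_trans hf _; clear -hD; lia.
have : 0 < #|~: U|.
  have := cardsC U; rewrite card_ord => hh; clear -hh cU; lia.
case/card_gt0P => col; rewrite inE => colU.
exists (fun g => if g == f then col else c g) => f1 g1 f1F g1F f1g1 hcf.
have key2 g : g \in F -> g != f -> edges_conflict e f g -> col != c g.
  move=> gF gf hg; apply/eqP => cg.
  have : c g \in U by apply: imset_f; rewrite inE gF gf hg.
  by rewrite -cg (negbTE colU).
case: (eqVneq f1 f) => [f1f|f1f]; case: (eqVneq g1 f) => [g1f|g1f].
- by rewrite f1f g1f eqxx in f1g1.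
- by subst f1; apply: key2.
- by subst g1; rewrite eq_sym; apply: key2 => //; apply: conflict_sym.
- by apply: hc => //; rewrite !inE ?f1f ?g1f ?f1F ?g1F.
Qed.
End Main.

Theorem corollary2 (T : finType) (e : rel T) :
  simple_graph e -> two_degenerate e -> 2 <= max_degree e ->
  strong_chromatic_index_le e (6 * max_degree e - 7).
Proof.
move=> [sym irr] H2 hD.
have [r [rinj rb]] := @rank_ex T e H2 _ _ (erefl #|[set: T]|).
have rinj' : injective r by move=> x y h; apply: rinj; rewrite ?inE.
have hout v : #|[set z | e v z & r v < r z]| <= 2.
  have := rb v (in_setT v); congr (_ <= _); apply: eq_card => z; by rewrite !inE.
have [c hc] := @color_all T e r sym irr rinj' hout hD _ _ (erefl #|edges e|) (subxx _).
by exists c => f g fE gE fg hfg; apply: hc.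
Qed.
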